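(* Let $f:\mathbb{R}^d\to\mathcal{Y}$ be a classifier (deterministic or randomized), let $x'\in\mathbb{R}^d$, let $y\in\mathcal{Y}$ be the ground-truth label, and let $\epsilon$ be a random noise vector in $\mathbb{R}^d$ drawn from a continuous probability density $\varphi(\cdot,\boldsymbol{\kappa})$ with mean $0$. Let $p\in(0,1)$ be an attack-success-probability threshold and let $\underline{p_{adv}}$ be a number satisfying $$\mathbb{P}_{\epsilon}[f(x'+\epsilon)\neq y]\ \geq\ \underline{p_{adv}}\ \geq\ p .$$ For a shifting vector $\delta\in\mathbb{R}^d$, let $\Phi_-$ denote the cumulative distribution function of the real random variable $\frac{\varphi(\epsilon-\delta,\boldsymbol{\kappa})}{\varphi(\epsilon,\boldsymbol{\kappa})}$ and $\Phi_-^{-1}$ its inverse, and let $\Phi_+$ denote the cumulative distribution function of the real random variable $\frac{\varphi(\epsilon,\boldsymbol{\kappa})}{\varphi(\epsilon+\delta,\boldsymbol{\kappa})}$ (both with $\epsilon\sim\varphi(\cdot,\boldsymbol{\kappa})$). Then for every $\delta$ satisfying $$\Phi_+\big[\Phi_-^{-1}(\underline{p_{adv}})\big]\geq p,$$ it holds that $\mathbb{P}_{\epsilon}[f(x'+\delta+\epsilon)\neq y]\geq p$.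
   Context: $\varphi(\cdot,\boldsymbol{\kappa})$ denotes a zero-mean noise density on $\mathbb{R}^d$ with parameters $\boldsymbol{\kappa}$ (e.g. Gaussian, Laplace, Cauchy, generalized normal); adding $\epsilon\sim\varphi(\cdot,\boldsymbol{\kappa})$ to a point $x'$ gives the ''adversarial distribution'' $\varphi(x',\boldsymbol{\kappa})$ centered at $x'$, and $x'+\delta+\epsilon$ is the shifted distribution $\varphi(x'+\delta,\boldsymbol{\kappa})$. In the paper, $\underline{p_{adv}}$ is a lower bound on the misclassification probability of samples from $\varphi(x',\boldsymbol{\kappa})$, obtained by Monte Carlo querying. *)

(* Defs.v *)
From HB Require Import structures.
From mathcomp Require Import all_boot all_order all_algebra.
From mathcomp Require Import all_classical all_reals all_analysis.
Set Implicit Arguments. Unset Strict Implicit. Unset Printing Implicit Defensive.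
Import Order.TTheory GRing.Theory Num.Theory.
Import numFieldNormedType.Exports.
Local Open Scope classical_set_scope.
Local Open Scope ring_scope.

(* R^d is modelled as row vectors 'rV[R]_d; the coordinate i of x is x 0 i. *)

Definition Rd (R : realType) (d : nat) :=
  g_sigma_algebraType (@open 'rV[R]_d).

(* [lam] is the Lebesgue measure on R^d: it gives every half-open box its
   volume (this property characterizes Lebesgue measure on the Borel sets);
   translation invariance of Lebesgue measure is recorded explicitly too. *)
Definition is_lebesgue_measure (R : realType) (d : nat)
    (lam : {measure set (Rd R d) -> \bar R}) : Prop :=
  (forall a b : 'rV[R]_d, (forall i, a 0 i <= b 0 i) ->
      lam [set x : Rd R d | forall i, a 0 i < (x : 'rV[R]_d) 0 i <= b 0 i]
      = (\prod_(i < d) (b 0 i - a 0 i))%:E) /\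
  (forall (A : set (Rd R d)) (v : 'rV[R]_d), measurable A ->
      lam [set ((x : 'rV[R]_d) + v : Rd R d) | x in A] = lam A).

Definition is_zero_mean_cont_density (R : realType) (d : nat)
    (lam : {measure set (Rd R d) -> \bar R}) (phi : 'rV[R]_d -> R) : Prop :=
  [/\ continuous phi,
      (forall z, 0 <= phi z),
      (\int[lam]_(z in [set: Rd R d]) (phi z)%:E = 1)%E &
      (forall i : 'I_d,
         lam.-integrable [set: Rd R d] (fun z : Rd R d => ((z : 'rV[R]_d) 0 i * phi z)%:E)
         /\ (\int[lam]_(z in [set: Rd R d]) ((z : 'rV[R]_d) 0 i * phi z)%:E = 0)%E)].

Definition noise_prob (R : realType) (d : nat)
    (lam : {measure set (Rd R d) -> \bar R}) (phi : 'rV[R]_d -> R)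
    (A : set (Rd R d)) : \bar R :=
  (\int[lam]_(z in A) (phi z)%:E)%E.

(* Ratio of two nonnegative density values, as an extended real;
   a positive quantity divided by 0 is +oo (convention a/0 = +oo). *)
Definition dens_ratio (R : realType) (a b : R) : \bar R :=
  if b == 0 then +oo%E else (a / b)%:E.

Definition Phi_minus (R : realType) (d : nat)
    (lam : {measure set (Rd R d) -> \bar R}) (phi : 'rV[R]_d -> R)
    (delta : 'rV[R]_d) (t : R) : \bar R :=
  noise_prob lam phi
    [set z : Rd R d | (dens_ratio (phi ((z : 'rV[R]_d) - delta)%R) (phi z) <= t%:E)%E].

Definition Phi_plus (R : realType) (d : nat)
    (lam : {measure set (Rd R d) -> \bar R}) (phi : 'rV[R]_d -> R)
    (delta : 'rV[R]_d) (t : R) : \bar R :=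
  noise_prob lam phi
    [set z : Rd R d | (dens_ratio (phi z) (phi ((z : 'rV[R]_d) + delta)%R) <= t%:E)%E].

(* A (possibly randomized) classifier f : R^d -> Y is a probability kernel:
   f x is the distribution of the label output on input x (a deterministic
   classifier g is the kernel x |-> dirac (g x)).
   misclass_prob = P_eps[f(x + eps) <> y], eps ~ phi. *)
Definition misclass_prob (R : realType) (d : nat)
    (lam : {measure set (Rd R d) -> \bar R}) (phi : 'rV[R]_d -> R)
    dY (Y : measurableType dY) (f : R.-pker (Rd R d) ~> Y)
    (x : 'rV[R]_d) (y : Y) : \bar R :=
  (\int[lam]_(z in [set: Rd R d]) ((phi z)%:E * f ((x + (z : 'rV[R]_d))%R : Rd R d) (~` [set y])))%E.

(* Main.v *)
Require Import Defs.
From HB Require Import structures.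
From mathcomp Require Import all_boot all_order all_algebra.
From mathcomp Require Import all_classical all_reals all_analysis.
From mathcomp Require Import measurable_realfun lra.
Import Order.TTheory GRing.Theory Num.Theory.
Import numFieldNormedType.Exports.
Local Open Scope classical_set_scope.
Local Open Scope ring_scope.

Lemma cont_meas_R (R : realType) (d : nat) (h : 'rV[R]_d -> R) :
  continuous h -> measurable_fun [set: Rd R d] (h : Rd R d -> R).
Proof.
move=> /continuousP ch; apply: (measurability _ (RGenOpens.measurableE R)).
move=> _ [_ [a [b ->]] <-]; apply: sub_sigma_algebra; rewrite setTI.
exact/ch/interval_open.
Qed.

Lemma cont_meas_Rd (R : realType) (d : nat) (h : 'rV[R]_d -> 'rV[R]_d) :
  continuous h -> measurable_fun [set: Rd R d] (h : Rd R d -> Rd R d).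
Proof.
move=> /continuousP ch; apply: (@measurability _ _ (Rd R d) (Rd R d) setT h (@open 'rV[R]_d)) => //.
move=> _ [B oB <-]; apply: sub_sigma_algebra; rewrite setTI.
exact/ch.
Qed.

Lemma shift_cont (R : realType) (d : nat) (v : 'rV[R]_d) :
  continuous (fun x : 'rV[R]_d => x + v).
Proof. move=> x; apply: (@cvgD _ _ _ (nbhs x) _ (fun x => x) (fun=> v)); [exact: cvg_id | exact: cvg_cst]. Qed.

Lemma transl (R : realType) (d : nat) (lam : {measure set (Rd R d) -> \bar R})
  (HL : is_lebesgue_measure lam) (v : 'rV[R]_d) (h : Rd R d -> \bar R) :
  measurable_fun setT h -> (forall x, (0 <= h x)%E) ->
  (\int[lam]_(x in setT) h x = \int[lam]_(z in setT) h (((z : 'rV[R]_d) + v)%R : Rd R d))%E.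
Proof.
move=> mh h0.
have msh := @cont_meas_Rd R d _ (shift_cont R d v).
have E := ge0_integral_pushforward msh lam measurableT mh (fun x _ => h0 x).
rewrite preimage_setT in E; rewrite -E; apply: eq_measure_integral.
move=> A mA _; rewrite /pushforward -(HL.2 A (- v) mA); congr (lam _).
apply/seteqP; split => x /=.
  by move=> [a Aa <-]; rewrite subrK.
by move=> Ax; exists (x + v) => //; rewrite addrK.
Qed.

Lemma shiftl_cont (R : realType) (d : nat) (v : 'rV[R]_d) :
  continuous (fun x : 'rV[R]_d => v + x).
Proof. move=> x; apply: (@cvgD _ _ _ (nbhs x) _ (fun=> v) (fun x => x)); [exact: cvg_cst | exact: cvg_id]. Qed.

Theorem theorem1 (R : realType) (d : nat)
    (lam : {measure set (Rd R d) -> \bar R}) (phi : 'rV[R]_d -> R)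
    (dY : measure_display) (Y : measurableType dY)
    (f : R.-pker (Rd R d) ~> Y) (x' : 'rV[R]_d) (y : Y) (p padv : R) :
  is_lebesgue_measure lam ->
  is_zero_mean_cont_density lam phi ->
  measurable [set y] ->
  0 < p < 1 ->
  (misclass_prob lam phi f x' y >= padv%:E)%E ->
  padv >= p ->
  forall (delta : 'rV[R]_d) (t : R),
    (* t = Phi_-^{-1}(padv) *)
    Phi_minus lam phi delta t = padv%:E ->
    (Phi_plus lam phi delta t >= p%:E)%E ->
    (misclass_prob lam phi f (x' + delta) y >= p%:E)%E.
Proof.
move=> HL [phic phi0 _ _] my /andP[p0 _] Hmis padvp delta t Hmin Hplus.
have mC : measurable (~` [set y]) by exact: measurableC.
pose K (z : Rd R d) : \bar R := f ((x' + (z : 'rV[R]_d))%R : Rd R d) (~` [set y]).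
have K0 z : (0 <= K z)%E by exact: measure_ge0.
have K1 z : (K z <= 1)%E.
  by rewrite /K -(@prob_kernel _ _ _ _ _ f ((x' + (z : 'rV[R]_d))%R : Rd R d)); apply: le_measure; rewrite ?inE.

have mphi : measurable_fun [set: Rd R d] (phi : Rd R d -> R) by exact: cont_meas_R.
have ma : measurable_fun [set: Rd R d] (fun w : Rd R d => phi ((w : 'rV[R]_d) - delta)).
  exact: (measurableT_comp mphi (@cont_meas_Rd R d _ (shift_cont R d (- delta)))).
have mK : measurable_fun [set: Rd R d] K.
  exact: (measurableT_comp (measurable_kernel f _ mC) (@cont_meas_Rd R d _ (shiftl_cont R d x'))).
pose S := [set w : Rd R d | (dens_ratio (phi ((w : 'rV[R]_d) - delta)%R) (phi w) <= t%:E)%E].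
have SE : S = [set w : Rd R d | phi w != 0] `&`
               [set w : Rd R d | phi ((w : 'rV[R]_d) - delta) - t * phi w <= 0].
  apply/seteqP; split => w; rewrite /S /= /dens_ratio; have [->|b0] := eqVneq (phi w) 0.
  - by rewrite leye_eq.
  - have bp : 0 < phi w by rewrite lt0r b0 phi0.
    by rewrite lee_fin ler_pdivrMr // subr_le0 => H; split.
  - by case.
  - have bp : 0 < phi w by rewrite lt0r b0 phi0.
    by rewrite lee_fin ler_pdivrMr // => -[_]; rewrite subr_le0.
have mS : measurable S.
  rewrite SE; apply: measurableI.
    have := mphi measurableT (~` [set 0%R]) (measurableC (measurable_set1 0%R)).
    rewrite setTI; congr measurable.
    by apply/seteqP; split => w /= /eqP.
  have mg : measurable_fun [set: Rd R d]
      (fun w : Rd R d => phi ((w : 'rV[R]_d) - delta) - t * phi w).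
    exact: measurable_funB ma (measurable_funM (measurable_cst t) mphi).
  have := mg measurableT _ (@measurable_itv R `]-oo, 0]).
  rewrite setTI; congr measurable.
have t0 : 0 <= t.
  rewrite leNgt; apply/negP => tneg.
  have S0 : S = set0.
    apply/seteqP; split => w; last by []. rewrite /S /= /dens_ratio.
    have [e|b0] := eqVneq (phi w) 0; first by rewrite /= leye_eq.
    rewrite lee_fin leNgt => /negP; apply; apply: lt_le_trans tneg _.
    by apply: divr_ge0.
  change (noise_prob lam phi S = padv%:E) in Hmin.
  rewrite /noise_prob S0 integral_set0 in Hmin.
  move/esym: Hmin => /eqP; rewrite eqe => /eqP padv0.
  by move: padvp; rewrite padv0 leNgt p0.
pose fa := fun w : Rd R d => (phi ((w : 'rV[R]_d) - delta))%:E.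
pose fb := fun w : Rd R d => (phi w)%:E.
have mfa : measurable_fun [set: Rd R d] fa by exact/measurable_EFinP.
have mfb : measurable_fun [set: Rd R d] fb by exact/measurable_EFinP.
have mfaS : measurable_fun [set: Rd R d] (fa \_ S).
  exact: (measurable_restrictT _ mS).1 (measurable_funTS mfa).
have mfbS : measurable_fun [set: Rd R d] (fb \_ S).
  exact: (measurable_restrictT _ mS).1 (measurable_funTS mfb).
have fa0 w : (0 <= fa w)%E by rewrite lee_fin phi0.
have fb0 w : (0 <= fb w)%E by rewrite lee_fin phi0.
have faS0 w : (0 <= (fa \_ S) w)%E by apply: erestrict_ge0.
have fbS0 w : (0 <= (fb \_ S) w)%E by apply: erestrict_ge0.
have mfaK : measurable_fun [set: Rd R d] (fun w => fa w * K w)%E.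
  exact: emeasurable_funM.
have mfbK : measurable_fun [set: Rd R d] (fun w => fb w * K w)%E.
  exact: emeasurable_funM.
have faK0 w : (0 <= fa w * K w)%E by apply: mule_ge0.
have fbK0 w : (0 <= fb w * K w)%E by apply: mule_ge0.
have Hpt w : ((fa \_ S) w + t%:E * (fb w * K w) <= fa w * K w + t%:E * (fb \_ S) w)%E.
  have kf : K w \is a fin_num by rewrite ge0_fin_numE // (le_lt_trans (K1 w)) // ltey.
  have k0 := K0 w; have k1 := K1 w.
  rewrite -(fineK kf) in k0 k1 *; move: (fine (K w)) k0 k1 => k; rewrite !lee_fin => k0 k1.
  rewrite /patch /fa /fb; case: ifPn => [/set_mem|/negP nSw].
    rewrite SE => -[_ H].
    rewrite -!EFinM -!EFinD lee_fin.
    have h1 : 0 <= 1 - k by lra.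
    have h2 : 0 <= t * phi w - phi ((w : 'rV[R]_d) - delta) by move: H => /= H; lra.
    have := mulr_ge0 h1 h2; nra.
  rewrite -!EFinM -!EFinD lee_fin.
  have H : t * phi w <= phi ((w : 'rV[R]_d) - delta).
    have [e|b0] := eqVneq (phi w) 0; first by rewrite e mulr0 phi0.
    rewrite leNgt; apply/negP => H; apply: nSw; apply/mem_set; rewrite SE; split => //.
    by rewrite /=; lra.
  have h2 : 0 <= phi ((w : 'rV[R]_d) - delta) - t * phi w by lra.
  have := mulr_ge0 k0 h2; nra.
have I : (\int[lam]_(w in [set: Rd R d]) ((fa \_ S) w + t%:E * (fb w * K w)) <=
          \int[lam]_(w in [set: Rd R d]) (fa w * K w + t%:E * (fb \_ S) w))%E.
  apply: ge0_le_integral => //.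
  all: try (by move=> w _; apply: adde_ge0 => //; apply: mule_ge0).
  all: try (by apply: emeasurable_funD => //; apply: measurable_funeM).
  all: try (by move=> w _; exact: Hpt).
rewrite ge0_integralD // in I; last first.
  all: try (by move=> w _; apply: mule_ge0).
  all: try (by apply: measurable_funeM).
rewrite [X in (_ <= X)%E]ge0_integralD // in I.
  all: try (by move=> w _; apply: mule_ge0).
  all: try (by apply: measurable_funeM).
rewrite !ge0_integralZl_EFin // in I.
have EBS : (\int[lam]_(w in [set: Rd R d]) (fb \_ S) w = padv%:E)%E.
  by rewrite -integral_mkcond; exact: Hmin.
have EA : (\int[lam]_(w in [set: Rd R d]) (fa w * K w) = misclass_prob lam phi f (x' + delta) y)%E.
  rewrite (@transl R d lam HL delta) //; apply: eq_integral => z _.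
  rewrite /fa /K addrK; congr (_ * f _ _)%E.
  by rewrite (addrC z delta) addrA.
have EAS : (\int[lam]_(w in [set: Rd R d]) (fa \_ S) w = Phi_plus lam phi delta t)%E.
  rewrite (@transl R d lam HL delta) //; rewrite /Phi_plus /noise_prob [in RHS]integral_mkcond.
  apply: eq_integral => z _; rewrite /patch /fa addrK.
  congr (if _ then _ else _); apply/idP/idP => /set_mem H; apply/mem_set; move: H.
    by rewrite /S /= addrK.
  by rewrite /S /= addrK.
rewrite EBS EA EAS in I.
have H1 : (Phi_plus lam phi delta t + t%:E * padv%:E <=
           Phi_plus lam phi delta t + t%:E * misclass_prob lam phi f x' y)%E.
  by apply: leeD2l; apply: lee_wpmul2l => //; rewrite lee_fin.
have H2 := le_trans H1 I.
rewrite leeD2rE // in H2.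
exact: le_trans Hplus H2.
Qed.
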